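(* Let $r,n\ge 1$ be integers and let $\Gamma=W(\mathcal K_r)\cong(\mathbb Z/2\mathbb Z)^r$, where $\mathcal K_r$ is the complete graph on $r$ vertices. Then \[ h_n(\Gamma)\le 4^{rn}\cdot n^r\cdot n^{(1-2^{-r})n}. \]
   Context: $W(\mathcal G)$ denotes the right-angled Coxeter group of a graph $\mathcal G$: generators $\sigma_v$ for the vertices, relations $\sigma_v^2=1$, and $\sigma_v\sigma_w=\sigma_w\sigma_v$ for adjacent $v,w$. For a group $\Gamma$, $h_n(\Gamma)=|\mathrm{Hom}(\Gamma,\mathrm{Sym}_n)|$ is the number of homomorphisms from $\Gamma$ to the symmetric group on $\{1,\dots,n\}$. *)

(* Defs.v *)
From mathcomp Require Import all_boot all_fingroup.
Set Implicit Arguments. Unset Strict Implicit. Unset Printing Implicit Defensive.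

(* The right-angled Coxeter group W(G) is
   presented by generators sigma_v (v in V) with sigma_v^2 = 1 and
   sigma_v sigma_w = sigma_w sigma_v for adjacent v, w.  By the universal
   property of a presentation, Hom(W(G), Sym_n) is in bijection with the
   assignments v |-> (image of sigma_v) in Sym_n satisfying the relations. *)
Definition RACG_homs (V : finType) (adj : rel V) (n : nat)
  : {set {ffun V -> {perm 'I_n}}} :=
  [set f : {ffun V -> {perm 'I_n}} |
     [forall v, (f v * f v == 1)%g] &&
     [forall v, forall w, adj v w ==> (f v * f w == f w * f v)%g]].

Definition h_RACG (V : finType) (adj : rel V) (n : nat) : nat :=
  #|RACG_homs adj n|.

Definition complete_adj (r : nat) : rel 'I_r := fun v w => v != w.

(* Main.v *)
Require Import Defs.
From mathcomp Require Import all_boot all_fingroup.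
From mathcomp Require Import zify.
From Stdlib Require ClassicalEpsilon.
Set Implicit Arguments. Unset Strict Implicit. Unset Printing Implicit Defensive.

Lemma setD1_id (T : finType) (a : T) (A : {set T}) : a \notin A -> A :\ a = A.
Proof.
move=> aA; apply/setP => i; rewrite !inE; case: (eqVneq i a) => // ->.
by rewrite (negbTE aA).
Qed.

Section Act.
Variables (r n : nat) (F : 'I_r -> 'I_n -> 'I_n).
Hypothesis FF : forall v x, F v (F v x) = x.
Hypothesis FC : forall v w x, F v (F w x) = F w (F v x).

Definition app (s : seq 'I_r) x := foldr F x s.
Definition act (C : {set 'I_r}) x := app [seq i <- enum 'I_r | i \in C] x.
Definition sd (C D : {set 'I_r}) := [set i | (i \in C) (+) (i \in D)].

Lemma app_F s v x : app s (F v x) = F v (app s x).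
Proof. by elim: s => [|a s IH] //=; rewrite IH FC. Qed.

Lemma app_rem s a x : a \in s -> app s x = F a (app (rem a s) x).
Proof.
elim: s => [|b s IH] //=; rewrite inE; case: (eqVneq b a) => [->|nab] //=.
move=> H; rewrite IH //; by rewrite FC.
Qed.

Lemma app_perm s t x : perm_eq s t -> app s x = app t x.
Proof.
elim: s t => [|a s IH] t /=; first by move=> /perm_size; case: t.
move=> pst.
have at_ : a \in t by rewrite -(perm_mem pst) mem_head.
have ps : perm_eq s (rem a t).
  by rewrite -(perm_cons a); apply: perm_trans pst (perm_to_rem at_).
by rewrite (IH _ ps) -app_rem.
Qed.

Lemma act0 x : act set0 x = x.
Proof.
rewrite /act (eq_filter (a2 := pred0)) ?filter_pred0 // => i; by rewrite inE.
Qed.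

Lemma act_toggle (P : {set 'I_r}) a x :
  F a (act P x) = act [set i | (a == i) (+) (i \in P)] x.
Proof.
rewrite /act.
have key : forall (A B : {set 'I_r}), a \in A -> B = A :\ a ->
    app [seq i <- enum 'I_r | i \in A] x = F a (app [seq i <- enum 'I_r | i \in B] x).
  move=> A B aA ->.
  rewrite (app_rem x (a := a)); last by rewrite mem_filter aA mem_enum.
  rewrite rem_filter; last exact: (filter_uniq _ (enum_uniq (mem 'I_r))).
  congr (F a (app _ x)); rewrite -filter_predI; apply: eq_filter => i /=; by rewrite !inE andbC.
case: (boolP (a \in P)) => aP.
  rewrite (key P [set i | (a == i) (+) (i \in P)]) ?FF //.
  apply/setP => i; rewrite !inE.
  by case: (eqVneq a i) => [<-|/negbTE ne]; rewrite ?aP ?eqxx //= eq_sym ne.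
rewrite (key [set i | (a == i) (+) (i \in P)] P) // ?inE ?eqxx ?(negbTE aP) //.
apply/setP => i; rewrite !inE.
by case: (eqVneq a i) => [<-|/negbTE ne]; rewrite ?(negbTE aP) ?eqxx //= eq_sym ne.
Qed.

Definition oddset (s : seq 'I_r) := [set i | odd (count_mem i s)].

Lemma app_oddset s x : app s x = act (oddset s) x.
Proof.
elim: s => [|a s IH].
  rewrite /= -[x in LHS]act0; congr act; apply/setP => i; by rewrite !inE.
rewrite [app _ _]/= IH act_toggle; congr act; apply/setP => i.
by rewrite !inE [count _ (_ :: _)]/= oddD oddb eq_sym.
Qed.

Lemma mem_sel (C : {set 'I_r}) i : (i \in [seq j <- enum 'I_r | j \in C]) = (i \in C).
Proof. by rewrite mem_filter mem_enum andbT. Qed.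

Lemma act_sd C D x : act C (act D x) = act (sd C D) x.
Proof.
rewrite /act /app -foldr_cat -/(app _ x) app_oddset; congr act.
have ue := enum_uniq (mem 'I_r).
apply/setP => i; rewrite !inE count_cat !count_uniq_mem ?(filter_uniq _ ue) //.
by rewrite !mem_sel; case: (i \in C); case: (i \in D).
Qed.

Lemma act_F C v x : act C (F v x) = F v (act C x).
Proof. exact: app_F. Qed.

Lemma act1 a x : act [set a] x = F a x.
Proof.
rewrite -[x in RHS]act0 act_toggle; congr act; apply/setP => i; rewrite !inE.
by rewrite addbF eq_sym.
Qed.

Lemma act_add a (C : {set 'I_r}) x : a \notin C -> act (a |: C) x = F a (act C x).
Proof.
move=> aC; rewrite act_toggle; congr act; apply/setP => i; rewrite !inE.
by case: (eqVneq a i) => [<-|/negbTE ne]; rewrite ?(negbTE aC) ?eqxx //= eq_sym ne.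
Qed.

Lemma actK C x : act C (act C x) = x.
Proof.
rewrite act_sd -[RHS]act0; congr act; apply/setP => i; by rewrite !inE addbb.
Qed.


Definition orb x : {set 'I_n} := [set act C x | C : {set 'I_r}].

Lemma orb_self x : x \in orb x.
Proof. by apply/imsetP; exists set0; rewrite ?act0. Qed.

Lemma orb_eq z x : z \in orb x -> orb z = orb x.
Proof.
case/imsetP => C _ ->; apply/setP => w; apply/imsetP/imsetP => [[D _ ->]|[D _ ->]].
  by exists (sd D C); rewrite ?act_sd.
by exists (sd D C) => //; rewrite -act_sd actK.
Qed.

Definition p x := [arg min_(z < x in orb x) val z].

Lemma pP x : p x \in orb x /\ forall z, z \in orb x -> p x <= z.
Proof. rewrite /p; case: arg_minnP => [|i Hi Hmin]; [exact: orb_self | by split]. Qed.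

Lemma p_orb x y : orb x = orb y -> p x = p y.
Proof.
move=> E; have [px hx] := pP x; have [py hy] := pP y.
rewrite E in px hx; apply: val_inj; apply/eqP; rewrite eqn_leq.
by rewrite hx // hy.
Qed.

Lemma orb_p x : orb (p x) = orb x.
Proof. by apply: orb_eq; case: (pP x). Qed.

Lemma pp x : p (p x) = p x.
Proof. by apply: p_orb; rewrite orb_p. Qed.

Lemma pF v x : p (F v x) = p x.
Proof.
apply: p_orb; apply: orb_eq; apply/imsetP; exists [set v] => //; by rewrite act1.
Qed.

Lemma x_orb_p x : x \in orb (p x).
Proof. by rewrite orb_p orb_self. Qed.

Lemma J_ex (y : 'I_n) k : k <= r -> exists J : {set 'I_r},
  [/\ (forall i, i \in J -> i < k),
      (forall C C' : {set 'I_r}, C \subset J -> C' \subset J -> act C y = act C' y -> C = C')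
    & (forall C : {set 'I_r}, (forall i, i \in C -> i < k) -> exists2 C' : {set 'I_r}, C' \subset J & act C y = act C' y)].
Proof.
elim: k => [|k IH] kr.
  exists set0; split.
  - by move=> i; rewrite inE.
  - move=> C C' /subset_leq_card; rewrite cards0 leqn0 cards_eq0 => /eqP ->.
    by move=> /subset_leq_card; rewrite cards0 leqn0 cards_eq0 => /eqP ->.
  - move=> C HC; exists set0; rewrite ?sub0set //; congr act; apply/setP => i.
    by rewrite inE; apply/negP => /HC.
have [J [Jk Jinj Jspan]] := IH (ltnW kr).
pose a : 'I_r := Ordinal kr.
have aJ : a \notin J by apply/negP => /Jk; rewrite ltnn.
have splitC : forall C : {set 'I_r}, (forall i, i \in C -> i < k.+1) ->
    forall i, i \in C :\ a -> i < k.
  move=> C HC i; rewrite !inE => /andP [ia /HC]; rewrite ltnS leq_eqVlt.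
  by case/orP => // /eqP ei; case/eqP: ia; apply: val_inj.
case: (boolP [exists D : {set 'I_r}, (D \subset J) && (act D y == F a y)]).
  case/existsP => D /andP [DJ /eqP DE].
  exists J; split => //.
  - by move=> i /Jk /ltnW.
  move=> C HC; case: (boolP (a \in C)) => aC.
    have Hs : forall i, i \in sd (C :\ a) D -> i < k.
      move=> i; rewrite inE; case: (boolP (i \in C :\ a)) => /= iC.
        by move=> _; apply: (splitC C HC).
      by move/(subsetP DJ)/Jk.
    have [C' C'J E] := Jspan (sd (C :\ a) D) Hs.
    exists C' => //; rewrite -E -act_sd DE -act1 act_sd; congr act.
    apply/setP => i; rewrite !inE; by case: (eqVneq i a) => [->|_]; rewrite /= ?aC ?addbF.
  apply: Jspan => i iC; apply: (splitC C HC); by rewrite !inE iC andbT; apply: contraNneq aC => <-.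
move=> nex.
have noD : forall D : {set 'I_r}, D \subset J -> act D y <> F a y.
  move=> D DJ E; case/existsP: nex; exists D; by rewrite DJ E eqxx.
exists (a |: J); split.
- move=> i; rewrite !inE; case/orP => [/eqP -> //|/Jk/ltnW //].
- have dec : forall C : {set 'I_r}, C \subset a |: J -> C :\ a \subset J.
    move=> C CJ; apply/subsetP => i; rewrite !inE => /andP [ia iC].
    by move/subsetP: CJ => /(_ i iC); rewrite !inE (negbTE ia).
  have actC : forall C : {set 'I_r}, act C y = if a \in C then F a (act (C :\ a) y) else act (C :\ a) y.
    move=> C; case: ifP => aC; first by rewrite -act_add ?setD1K // !inE eqxx.
    by rewrite setD1_id // aC.
  move=> C C' CJ C'J; rewrite (actC C) (actC C').
  have aJ' : forall D : {set 'I_r}, D \subset J -> a \notin D.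
    by move=> D DJ; apply: contra aJ; apply: (subsetP DJ).
  case: (boolP (a \in C)) => aC; case: (boolP (a \in C')) => aC' E.
  - have E' : act (C :\ a) y = act (C' :\ a) y by rewrite -[LHS](FF a) E FF.
    by rewrite -(setD1K aC) -(setD1K aC') (Jinj _ _ (dec _ CJ) (dec _ C'J) E').
  - exfalso; apply: (noD (sd (C :\ a) (C' :\ a))).
      apply/subsetP => i; rewrite inE; case: (boolP (i \in C :\ a)) => /= h.
        by move=> _; apply: (subsetP (dec _ CJ)).
      by apply: (subsetP (dec _ C'J)).
    by rewrite -act_sd -E act_F actK.
  - exfalso; apply: (noD (sd (C' :\ a) (C :\ a))).
      apply/subsetP => i; rewrite inE; case: (boolP (i \in C' :\ a)) => /= h.
        by move=> _; apply: (subsetP (dec _ C'J)).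
      by apply: (subsetP (dec _ CJ)).
    by rewrite -act_sd E act_F actK.
  - by rewrite -(setD1_id aC) -(setD1_id aC') (Jinj _ _ (dec _ CJ) (dec _ C'J) E).
- move=> C HC; have [C' C'J E] := Jspan (C :\ a) (splitC C HC).
  have aC' : a \notin C' by apply: contra aJ; apply: (subsetP C'J).
  case: (boolP (a \in C)) => aC.
    exists (a |: C'); first by rewrite setUS.
    by rewrite act_add // -E -act_add ?setD1K // !inE eqxx.
  exists C'; first by apply: subset_trans C'J (subsetUr _ _).
  by rewrite -E setD1_id.
Qed.


Definition Jspec (y : 'I_n) (J : {set 'I_r}) :=
  [forall C : {set 'I_r}, forall C' : {set 'I_r},
     ((C \subset J) && (C' \subset J) && (act C y == act C' y)) ==> (C == C')] &&
  [forall C : {set 'I_r}, [exists C' : {set 'I_r}, (C' \subset J) && (act C y == act C' y)]].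

Definition JJ y := odflt set0 [pick J | Jspec y J].

Lemma JJP y : Jspec y (JJ y).
Proof.
rewrite /JJ; case: pickP => [J //|none]; exfalso.
have [J [_ Jinj Jspan]] := J_ex y (leqnn r).
move: (none J); rewrite /Jspec; case/negP; apply/andP; split.
  apply/forallP => C; apply/forallP => C'; apply/implyP => /andP [/andP [h1 h2] /eqP h3].
  by rewrite (Jinj _ _ h1 h2 h3).
apply/forallP => C; have [C' h1 h2] := Jspan C (fun i _ => ltn_ord i).
by apply/existsP; exists C'; rewrite h1 h2 eqxx.
Qed.

Lemma J_inj y (C C' : {set 'I_r}) : C \subset JJ y -> C' \subset JJ y -> act C y = act C' y -> C = C'.
Proof.
move=> h1 h2 h3; case/andP: (JJP y) => /forallP /(_ C) /forallP /(_ C') + _.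
by rewrite h1 h2 h3 eqxx => /eqP.
Qed.

Lemma J_span y (C : {set 'I_r}) : exists2 C' : {set 'I_r}, C' \subset JJ y & act C y = act C' y.
Proof.
case/andP: (JJP y) => _ /forallP /(_ C) /existsP [C' /andP [h1 /eqP h2]].
by exists C'.
Qed.

Definition c (x : 'I_n) := odflt set0 [pick C : {set 'I_r} | (C \subset JJ (p x)) && (act C (p x) == x)].

Lemma cP x : c x \subset JJ (p x) /\ act (c x) (p x) = x.
Proof.
rewrite /c; case: pickP => [C /andP [h1 /eqP h2] //|none]; exfalso.
have := x_orb_p x; case/imsetP => C _ E.
have [C' h1 h2] := J_span (p x) C.
by move: (none C'); rewrite h1 -h2 -E eqxx.
Qed.

Lemma c_uniq x (C : {set 'I_r}) : C \subset JJ (p x) -> act C (p x) = x -> c x = C.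
Proof. move=> h1 h2; have [h3 h4] := cP x; apply: J_inj h3 h1 _; by rewrite h4. Qed.

Definition B (x : 'I_n) : {set 'I_r} :=
  if [pick i | c x == [set i]] is Some i then
    [set v | (v != i) && (i \in c (F v (p x)))] else set0.

End Act.

Definition Dfun (r n : nat) (p : 'I_n -> 'I_n) (c B : 'I_n -> {set 'I_r}) (y : 'I_n) (v : 'I_r) :=
  [set i | [exists z, [&& p z == y, c z == [set i] & (v == i) || (v \in B z)]]].

Section Props.
Variables (r n : nat) (F : 'I_r -> 'I_n -> 'I_n).
Hypothesis FF : forall v x, F v (F v x) = x.
Hypothesis FC : forall v w x, F v (F w x) = F w (F v x).

Local Notation p := (p F).
Local Notation c := (c F).
Local Notation B := (B F).
Local Notation act := (act F).

Lemma c_rep x : p x = x -> c x = set0.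
Proof.
move=> px; apply: c_uniq => //; first by rewrite sub0set.
by rewrite act0 px.
Qed.

Lemma B_rep x : p x = x -> B x = set0.
Proof.
move=> px; rewrite /B (c_rep px); case: pickP => // i /eqP E.
by have := set11 i; rewrite -E inE.
Qed.

Lemma code_inj x z : p x = p z -> c x = c z -> x = z.
Proof.
move=> h1 h2; have [_ e1] := cP FF FC x; have [_ e2] := cP FF FC z.
by rewrite -e1 -e2 h1 h2.
Qed.

Lemma code_disj x : [disjoint c x & B x].
Proof.
rewrite /B; case: pickP => [i /eqP ->|_]; last by rewrite -setI_eq0 setI0.
by rewrite disjoints1 !inE eqxx.
Qed.

Lemma cF_single y i : p y = y -> i \in JJ F y -> c (F i y) = [set i].
Proof.
move=> py iJ; apply: c_uniq; rewrite ?pF // py; first by rewrite sub1set.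
by rewrite act1.
Qed.

Lemma code_step x v : p (F v x) = p x /\ c (F v x) = sd (c x) (Dfun p c B (p x) v).
Proof.
split; first exact: pF.
set y := p x.
have py : p y = y by rewrite /y pp.
have [cJ cx] := cP FF FC x.
have [dJ dx] := cP FF FC (F v y).
rewrite pF // py in dJ dx.
have DE : Dfun p c B y v = c (F v y).
  apply/setP => i; rewrite inE; apply/existsP/idP.
    case=> z /and3P [/eqP pz /eqP cz hv].
    have [_ zx] := cP FF FC z; rewrite cz pz (act1 FF FC) in zx.
    move: hv; rewrite /B cz; case: pickP => [j /eqP /set1_inj ji|/(_ i)]; last by rewrite eqxx.
    subst j; rewrite pz; case: eqVneq => [-> _|_ /=]; first by rewrite zx cz set11.
    by rewrite inE => /andP [].
  move=> iD; have iJ : i \in JJ F y by apply: (subsetP dJ).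
  exists (F i y); rewrite pF // py eqxx /= cF_single //= eqxx /=.
  rewrite /B cF_single //; case: pickP => [j /eqP /set1_inj ji|/(_ i)]; last by rewrite eqxx.
  subst j; rewrite pF // py inE; by case: eqVneq.
rewrite DE; apply: c_uniq; rewrite ?pF //.
  apply/subsetP => i; rewrite inE; case: (boolP (i \in c x)) => /= h.
    by move=> _; apply: (subsetP cJ).
  by apply: (subsetP dJ).
by rewrite -act_sd // dx act_F // cx.
Qed.

End Props.


Lemma card_bigcup_le (I T : finType) (P : pred I) (A : I -> {set T}) :
  #|\bigcup_(i | P i) A i| <= \sum_(i | P i) #|A i|.
Proof.
elim/big_rec2: _ => [|i U k Pi IH]; first by rewrite cards0.
by apply: leq_trans (leq_card_setU _ _) _; rewrite leq_add2l.
Qed.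

Section Count.
Variables (r n : nat).
Definition CT := ('I_n * {set 'I_r} * {set 'I_r})%type.

Definition Fam (S : {set 'I_n}) (x : 'I_n) : pred CT :=
  if x \in S then pred1 ((x, set0), set0)
  else [pred t : CT | (t.1.2 != set0) && [disjoint t.1.2 & t.2]].

Definition Codes : {set {ffun 'I_n -> CT}} :=
  \bigcup_(S : {set 'I_n} | n <= #|S| * 2 ^ r) [set phi : {ffun 'I_n -> CT} | phi \in family (Fam S)].

Definition enc (t : CT) : 'I_n * {ffun 'I_r -> option bool} :=
  (t.1.1, [ffun i => if i \in t.1.2 then Some true else if i \in t.2 then Some false else None]).

Lemma card_Fam_out (S : {set 'I_n}) (x : 'I_n) : x \notin S -> #|Fam S x| <= n * (3 ^ r).-1.
Proof.
move=> xS.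
have sub : [set enc t | t in Fam S x] \subset setX [set: 'I_n] [set~ [ffun => None]].
  apply/subsetP => u /imsetP [[[a C] Bs] ht ->]; rewrite /Fam (negbTE xS) /= in ht.
  case/andP: ht => /set0Pn [i iC] _; rewrite !inE /=; apply/eqP => /ffunP /(_ i).
  by rewrite !ffunE iC.
have inj : {in Fam S x &, injective enc}.
  move=> [[a C] Bs] [[a' C'] Bs']; rewrite /Fam (negbTE xS) /= => /andP [_ d] /andP [_ d'].
  case=> -> E.
  have H : forall i, ((i \in C) = (i \in C')) /\ ((i \in Bs) = (i \in Bs')).
    move=> i; move/ffunP: E => /(_ i); rewrite !ffunE.
    move: d d'; rewrite -!setI_eq0 => /eqP /setP /(_ i) + /eqP /setP /(_ i).
    rewrite !inE.
    by case: (i \in C); case: (i \in Bs); case: (i \in C'); case: (i \in Bs').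
  by congr (_, _, _); apply/setP => i; case: (H i).
rewrite -(card_in_imset inj); apply: leq_trans (subset_leq_card sub) _.
by rewrite cardsX cardsT cardsC1 card_ffun card_option card_bool !card_ord.
Qed.

Lemma card_family_S (S : {set 'I_n}) : #|[set phi : {ffun 'I_n -> CT} | phi \in family (Fam S)]|
   <= (n * (3 ^ r).-1) ^ (n - #|S|).
Proof.
rewrite cardsE card_family foldrE big_image /=.
rewrite (bigID (fun x => x \in S)) /=.
rewrite (eq_bigr (fun _ => 1)); last first.
  by move=> x xS; rewrite /Fam xS card1.
rewrite big1_eq mul1n.
apply: leq_trans (leq_prod (E2 := fun _ => n * (3 ^ r).-1) _) _.
  by move=> x xS; apply: card_Fam_out.
rewrite prod_nat_const.
suff -> : #|[pred x | x \notin S]| = n - #|S| by [].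
have := cardC S; rewrite card_ord => E.
have le : #|S| <= n by move: (leq_addr #|[predC S]| #|S|); rewrite E.
apply: (@addnI #|S|); rewrite subnKC //; apply: etrans _ E; congr (_ + _).
Qed.


Definition s0 := (n + (2 ^ r).-1) %/ 2 ^ r.

Lemma s0_le (k : nat) : n <= k * 2 ^ r -> s0 <= k.
Proof.
move=> h; have m0 : 0 < 2 ^ r by rewrite expn_gt0.
rewrite -ltnS /s0 ltn_divLR // mulSn.
move: m0 h; set m := 2 ^ r; set km := k * m; move=> m0 h; lia.
Qed.

Lemma card_setT_set : #|{set 'I_n}| = 2 ^ n.
Proof. by rewrite -cardsT -powersetT card_powerset cardsT card_ord. Qed.

Lemma card_Codes : 0 < n -> 0 < r ->
  #|Codes| <= 2 ^ n * ((3 ^ r).-1 ^ n * n ^ (n - s0)).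
Proof.
move=> hn hr.
apply: leq_trans (card_bigcup_le _ _) _.
have H : forall S : {set 'I_n}, n <= #|S| * 2 ^ r ->
    #|[set phi : {ffun 'I_n -> CT} | phi \in family (Fam S)]| <= (3 ^ r).-1 ^ n * n ^ (n - s0).
  move=> S hS; apply: leq_trans (card_family_S S) _.
  rewrite expnMn mulnC leq_mul //.
    apply: leq_pexp2l; last exact: leq_subr.
    rewrite -ltnS prednK ?expn_gt0 //.
    by rewrite -[1](expn0 3) ltn_exp2l.
  apply: leq_pexp2l => //; apply: leq_sub2l; exact: s0_le.
apply: leq_trans (@leq_sum _ _ _ _ (fun _ => (3 ^ r).-1 ^ n * n ^ (n - s0)) H) _.
rewrite sum_nat_const leq_mul2r; apply/orP; right.
by rewrite -card_setT_set max_card.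
Qed.

End Count.

Section Main.
Variables (r n : nat).

Definition RelC (f : {ffun 'I_r -> {perm 'I_n}}) (phi : {ffun 'I_n -> CT r n}) :=
  (forall x z, (phi x).1 = (phi z).1 -> x = z) /\
  (forall x v, (phi (f v x)).1.1 = (phi x).1.1 /\
     (phi (f v x)).1.2 = sd (phi x).1.2
        (Dfun (fun z => (phi z).1.1) (fun z => (phi z).1.2) (fun z => (phi z).2) (phi x).1.1 v)).

Lemma RelC_uniq f f' phi : RelC f phi -> RelC f' phi -> f = f'.
Proof.
move=> [inj st] [_ st']; apply/ffunP => v; apply/permP => x; apply: inj.
have [a1 a2] := st x v; have [b1 b2] := st' x v.
by rewrite [LHS]surjective_pairing [RHS]surjective_pairing a1 a2 b1 b2.
Qed.

Lemma hom_FF f : f \in RACG_homs (@complete_adj r) n -> forall v x, f v (f v x) = x.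
Proof.
rewrite inE => /andP [/forallP H _] v x.
by rewrite -permM (eqP (H v)) perm1.
Qed.

Lemma hom_FC f : f \in RACG_homs (@complete_adj r) n -> forall v w x, f v (f w x) = f w (f v x).
Proof.
rewrite inE => /andP [_ /forallP H] v w x.
case: (eqVneq v w) => [-> //|ne].
move: (H w) => /forallP /(_ v) /implyP; rewrite /complete_adj eq_sym => /(_ ne) /eqP E.
by rewrite -!permM E.
Qed.

Lemma hom_code f : 0 < n -> 0 < r -> f \in RACG_homs (@complete_adj r) n ->
  exists2 phi, phi \in Codes r n & RelC f phi.
Proof.
move=> hn hr hf.
pose F := fun v x => f v x.
have FF : forall v x, F v (F v x) = x by exact: hom_FF.
have FC : forall v w x, F v (F w x) = F w (F v x) by exact: hom_FC.
exists [ffun x => (p F x, c F x, B F x)].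
  apply/bigcupP; exists [set x | p F x == x].
    pose g := fun x => (p F x, c F x).
    have ginj : injective g.
      by move=> x z [h1 h2]; apply: (code_inj FF FC h1 h2).
    have : [set g x | x in 'I_n] \subset setX [set x | p F x == x] [set: {set 'I_r}].
      apply/subsetP => u /imsetP [x _ ->]; by rewrite !inE /= pp // eqxx.
    move/subset_leq_card; rewrite card_imset // cardsX cardsT card_setT_set card_ord.
    by [].
  rewrite inE; apply/familyP => x; rewrite /Fam ffunE inE.
  case: ifP => [/eqP px|/negbT px]; first by rewrite inE c_rep // B_rep // px.
  rewrite inE /= code_disj // andbT.
  apply/eqP => c0; case/eqP: px; apply: (code_inj FF FC); first by rewrite pp.
  by rewrite c0 c_rep // pp.
split.
  move=> x z; rewrite !ffunE /= => [[h1 h2]]; exact: (code_inj FF FC h1 h2).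
move=> x v; rewrite !ffunE /=.
have [e1 e2] := code_step FF FC x v.
split; first exact: e1.
rewrite [LHS]e2; congr sd; apply/setP => i; rewrite !inE.
by apply: eq_existsb => z; rewrite !ffunE.
Qed.

End Main.

Lemma card_le_rel (T U : finType) (A : {set T}) (B : {set U}) (R : T -> U -> Prop) :
  (forall a, a \in A -> exists2 b, b \in B & R a b) ->
  (forall a a' b, R a b -> R a' b -> a = a') -> #|A| <= #|B|.
Proof.
move=> ex un.
case: (set_0Vmem A) => [-> |[a0 a0A]]; first by rewrite cards0.
have [b0 _ _] := ex a0 a0A.
pose g a := ClassicalEpsilon.epsilon (inhabits b0) (fun b => b \in B /\ R a b).
have gP : forall a, a \in A -> g a \in B /\ R a (g a).
  move=> a aA; have [b h1 h2] := ex a aA.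
  apply: (ClassicalEpsilon.epsilon_spec (inhabits b0) (fun b => b \in B /\ R a b)).
  by exists b.
have ginj : {in A &, injective g}.
  move=> a a' aA a'A E; apply: (un _ _ (g a)); first by case: (gP a aA).
  by rewrite E; case: (gP a' a'A).
rewrite -(card_in_imset ginj); apply: subset_leq_card; apply/subsetP => b.
by case/imsetP => a aA ->; case: (gP a aA).
Qed.

Lemma h_bound r n : 0 < n -> 0 < r ->
  h_RACG (@complete_adj r) n <= 2 ^ n * ((3 ^ r).-1 ^ n * n ^ (n - s0 r n)).
Proof.
move=> hn hr; apply: leq_trans (card_Codes hn hr).
rewrite /h_RACG; apply: (@card_le_rel _ _ _ _ (@RelC r n)).
  by move=> f hf; apply: hom_code.
by move=> f f' phi h1 h2; apply: RelC_uniq h1 h2.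
Qed.

Lemma two_K r : 0 < r -> 2 * (3 ^ r).-1 <= 4 ^ r.
Proof.
elim: r => [//|r IH] _.
case: r IH => [//|r] IH.
have := IH isT; rewrite !(expnS _ r.+1).
have h4 : 4 <= 4 ^ r.+1 by rewrite -{1}(expn1 4) leq_exp2l.
have h3 : 1 <= 3 ^ r.+1 by rewrite expn_gt0.
move: h4 h3; set a := 3 ^ r.+1; set b := 4 ^ r.+1; lia.
Qed.

Lemma h_bound2 r n : 0 < n -> 0 < r ->
  h_RACG (@complete_adj r) n <= 4 ^ (r * n) * n ^ (n - s0 r n).
Proof.
move=> hn hr; apply: leq_trans (h_bound hn hr) _.
rewrite mulnA leq_mul2r; apply/orP; right.
by rewrite -expnMn mulnC expnM leq_exp2r // mulnC two_K.
Qed.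

Lemma s0_props r n : n <= s0 r n * 2 ^ r /\ s0 r n <= n.
Proof.
split; last by apply: s0_le; rewrite leq_pmulr // expn_gt0.
have m0 : 0 < 2 ^ r by rewrite expn_gt0.
rewrite /s0; have := divn_eq (n + (2 ^ r).-1) (2 ^ r).
have := ltn_pmod (n + (2 ^ r).-1) m0.
move: m0; set m := 2 ^ r; set q := (n + m.-1) %/ m; set rr := (n + m.-1) %% m.
set qm := q * m; lia.
Qed.

Lemma expn_pow m k : expn m k = Nat.pow m k.
Proof. by elim: k => [//|k IH]; rewrite expnS IH. Qed.

From Stdlib Require Import Reals Lra Psatz.

Theorem proposition3p3 (r n : nat) (hr : (1 <= r)%N) (hn : (1 <= n)%N) :
  (INR (h_RACG (@complete_adj r) n)
   <= INR (4 ^ (r * n)) * INR (n ^ r)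
      * Rpower (INR n) ((1 - / (2 ^ r)) * INR n))%R.
Proof.
have hr' : (0 < r)%N := hr.
have hn' : (0 < n)%N := hn.
have H := h_bound2 hn' hr'.
have [Hs1 Hs2] := s0_props r n.
set s := s0 r n in H Hs1 Hs2.
have Hle : (INR (h_RACG (@complete_adj r) n) <= INR (4 ^ (r * n)) * INR (n ^ (n - s)))%R.
  rewrite -mult_INR; apply: le_INR; apply/ssrnat.leP.
  by rewrite -!expn_pow.
have nR : (1 <= INR n)%R by apply: (le_INR 1); apply/ssrnat.leP.
have npos : (0 < INR n)%R by lra.
have P1 : (INR (n ^ (n - s)) <= Rpower (INR n) ((1 - / (2 ^ r)) * INR n))%R.
  rewrite pow_INR -Rpower_pow //; apply: Rle_Rpower => //.
  rewrite minus_INR; last by apply/ssrnat.leP.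
  have t0 : (0 < 2 ^ r)%R by apply: pow_lt; lra.
  have E : (INR n <= INR s * 2 ^ r)%R.
    rewrite -(pow_INR 2) -mult_INR; apply: le_INR; apply/ssrnat.leP.
    by rewrite -expn_pow.
  have E2 : (INR n * / 2 ^ r <= INR s)%R.
    apply: (Rmult_le_reg_r (2 ^ r)) => //.
    rewrite Rmult_assoc Rinv_l; lra.
  lra.
have A0 : (0 <= INR (4 ^ (r * n)))%R by apply: pos_INR.
have N1 : (1 <= INR (n ^ r))%R.
  rewrite pow_INR; apply: pow_R1_Rle; lra.
have Q0 : (0 <= Rpower (INR n) ((1 - / (2 ^ r)) * INR n))%R.
  by apply: Rlt_le; apply: exp_pos.
apply: Rle_trans Hle _.
rewrite Rmult_assoc; apply: Rmult_le_compat_l => //.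
apply: Rle_trans P1 _.
nra.
Qed.
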